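(* Let $p>0$, $N\ge 2$, $1\le K\le N-1$, and let $\alpha_1,\dots,\alpha_N>0$ satisfy $$\sum_{j=1}^K\alpha_j^{-2/p}=\sum_{j=K+1}^N\alpha_j^{-2/p}.$$ Then there exists a one-parameter family of solutions $\Phi=(\phi_1,\dots,\phi_N)^T\in H^2_\Gamma$ of the stationary NLS equation $$-\phi_j''+\phi_j-(p+1)\alpha_j^2|\phi_j|^{2p}\phi_j=0\ \text{ on }\mathbb{R}^+,\quad j=1,\dots,N,$$ given by $$\phi_j(x)=\begin{cases}\alpha_j^{-1/p}\phi(x+a),& j=1,\dots,K,\\ \alpha_j^{-1/p}\phi(x-a),& j=K+1,\dots,N,\end{cases}$$ where $\phi(x)=\operatorname{sech}^{1/p}(px)$ and $a\in\mathbb{R}$ is arbitrary.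
   Context: $\Gamma$ is a star graph of $N$ half-lines $\mathbb{R}^+$ joined at the vertex $x=0$. $H^1_\Gamma=\{\Psi\in\oplus_{j=1}^NH^1(\mathbb{R}^+):\alpha_1^{1/p}\psi_1(0)=\dots=\alpha_N^{1/p}\psi_N(0)\}$ and $H^2_\Gamma=\{\Psi\in\oplus_{j=1}^NH^2(\mathbb{R}^+)\cap H^1_\Gamma:\sum_{j=1}^N\alpha_j^{-1/p}\psi_j'(0)=0\}$ (one-sided values at $x=0$). *)

(* Defs.v *)
From Stdlib Require Import Reals.
From Coquelicot Require Import Coquelicot.
Open Scope R_scope.

Definition L2_halfline (g : R -> R) : Prop :=
  ex_RInt_gen (fun x => (g x)^2) (at_right 0) (Rbar_locally p_infty).

(* Membership of f (restricted to [0,+oo)) in H^2(R^+), for functions which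
   are classically twice differentiable on (0,+oo):
   f continuous on [0,+oo), f and f' differentiable on (0,+oo),
   f, f', f'' square integrable on (0,+oo), and f' has a one-sided limit
   at 0 (the trace of f', needed for the Kirchhoff condition). *)
Definition H2_halfline (f : R -> R) : Prop :=
  (forall x, 0 <= x -> filterlim f (at_right x) (locally (f x))) /\
  (forall x, 0 < x -> ex_derive f x /\ ex_derive (Derive f) x) /\
  L2_halfline f /\ L2_halfline (Derive f) /\ L2_halfline (Derive (Derive f)).

Definition deriv_at_vertex (f : R -> R) (d : R) : Prop :=
  filterlim (Derive f) (at_right 0) (locally d).

Definition H2_Gamma (N : nat) (p : R) (alpha : nat -> R)
  (Psi : nat -> R -> R) : Prop :=
  (forall j, (j < N)%nat -> H2_halfline (Psi j)) /\
  (forall i j, (i < N)%nat -> (j < N)%nat ->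
     Rpower (alpha i) (1 / p) * Psi i 0 = Rpower (alpha j) (1 / p) * Psi j 0) /\
  exists d : nat -> R,
    (forall j, (j < N)%nat -> deriv_at_vertex (Psi j) (d j)) /\
    sum_n_m (fun j => Rpower (alpha j) (- (1 / p)) * d j) 0 (N - 1) = 0.

Definition phi_sol (p x : R) : R := Rpower (/ cosh (p * x)) (1 / p).

(* Main.v *)
From Coquelicot Require Import Coquelicot.
From Stdlib Require Import Reals Lra Lia Classical FunctionalExtensionality.
Open Scope R_scope.
Require Import Defs.

Lemma exp_le' x y : x <= y -> exp x <= exp y.
Proof. intros [H|H]. left; apply exp_increasing; auto. subst; lra. Qed.

Lemma exd_cont (f : R -> R) (x : R) : ex_derive f x -> continuous f x.
Proof. intros H. exact (ex_derive_continuous (K:=R_AbsRing) (V:=R_NormedModule) f x H). Qed.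

Lemma L2_gen (f : R -> R) (K : R) : (forall x, continuous f x) -> (forall x, 0 <= f x) ->
  (forall x, f x <= K * exp (-2*x)) -> ex_RInt_gen f (at_right 0) (Rbar_locally p_infty).
Proof.
  intros Hc Hpos Hb.
  assert (Hex: forall u v, ex_RInt f u v) by (intros; apply (ex_RInt_continuous (V:=R_CompleteNormedModule)); intros; apply Hc).
  set (F := fun v => RInt f 0 v).
  assert (HI: forall u v, is_RInt f u v (F v - F u)).
  { intros u v. replace (F v - F u) with (RInt f u v). apply (RInt_correct (V:=R_CompleteNormedModule)), Hex.
    unfold F. rewrite <- (RInt_Chasles (V:=R_CompleteNormedModule) f 0 u v) by auto. unfold plus; simpl. lra. }
  assert (Hmono: forall u v, u <= v -> F u <= F v).
  { intros u v huv. assert (0 <= RInt f u v) by (apply RInt_ge_0; auto).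
    rewrite (is_RInt_unique (V:=R_CompleteNormedModule) _ _ _ _ (HI u v)) in H. lra. }
  assert (HK: 0 <= K).
  { pose proof (Hb 0). pose proof (Hpos 0). replace (-2*0) with 0 in H by ring. rewrite exp_0 in H. lra. }
  assert (Hbd: forall v, 0 <= v -> F v <= K/2).
  { intros v hv.
    assert (HG: is_RInt (fun x => K * exp (-2*x)) 0 v (minus ((fun x => -K/2 * exp (-2*x)) v) ((fun x => -K/2 * exp (-2*x)) 0))).
    { apply (is_RInt_derive (fun x => -K/2 * exp (-2*x))).
      - intros x _. auto_derive; auto. field.
      - intros x _. apply (ex_derive_continuous (fun x => K * exp (-2*x))). auto_derive; auto. }
    unfold F. apply Rle_trans with (RInt (fun x => K * exp (-2*x)) 0 v).
    { apply RInt_le; [auto| apply Hex | eexists; exact HG | intros; apply Hb]. }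
    rewrite (is_RInt_unique (V:=R_CompleteNormedModule) _ _ _ _ HG). unfold minus, plus, opp; simpl.
    replace (-2*0) with 0 by ring. rewrite exp_0. pose proof (exp_pos (-2*v)). nra. }
  destruct (completeness (fun y => exists v, 0 <= v /\ y = F v)) as [L HL].
  { exists (K/2). intros y [v [hv ->]]. auto. }
  { exists (F 0). exists 0. split; lra. }
  assert (HF0: F 0 = 0). { unfold F. rewrite (RInt_point (V:=R_CompleteNormedModule)). reflexivity. }
  assert (HcF: continuous F 0).
  { apply (continuous_RInt_1 f 0 0 F). apply filter_forall. intros; apply (RInt_correct (V:=R_CompleteNormedModule)), Hex. }
  exists L. apply (filterlimi_lim_ext_loc (fun ab : R * R => F (snd ab) - F (fst ab))).
  - apply (Filter_prod _ _ _ (fun _ => True) (fun _ => True)); try apply filter_true.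
    intros; apply HI.
  - apply filterlim_locally. intros eps.
    assert (Hv0: exists v0, 0 <= v0 /\ L - eps/2 < F v0).
    { destruct (classic (exists v0, 0 <= v0 /\ L - eps/2 < F v0)) as [H|H]; auto.
      exfalso. destruct HL as [_ HL].
      assert (L <= L - eps/2).
      { apply HL. intros y [v [hv ->]]. destruct (Rle_or_lt (F v) (L - eps/2)); auto.
        exfalso; apply H; exists v; split; auto. }
      pose proof (cond_pos eps). lra. }
    destruct Hv0 as [v0 [hv0 Hv0]].
    assert (eps2 : 0 < eps/2) by (pose proof (cond_pos eps); lra).
    pose proof (proj1 (filterlim_locally F (F 0)) HcF (mkposreal _ eps2)) as Hloc.
    apply (Filter_prod _ _ _ (fun u => ball (F 0) (eps/2) (F u)) (fun v => v0 < v)).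
    + unfold at_right, within. eapply filter_imp; [|exact Hloc]. simpl; auto.
    + exists v0. auto.
    + intros u v Hu Hv. simpl. unfold ball in *; simpl in *; unfold AbsRing_ball, abs, minus, plus, opp in *; simpl in *.
      rewrite HF0 in Hu. apply Rabs_def2 in Hu.
      assert (F v <= L). { destruct HL as [HL _]. apply HL. exists v; split; auto; lra. }
      assert (F v0 <= F v) by (apply Hmono; lra).
      apply Rabs_def1; lra.
Qed.
Definition Ch p y := (exp (p*y) + exp (-(p*y)))/2.
Definition Sh p y := (exp (p*y) - exp (-(p*y)))/2.
Definition ph p y := exp (-(1/p) * ln (Ch p y)).
Definition phd p y := - ph p y * (Sh p y / Ch p y).
Definition phdd p y := ph p y * ((Sh p y / Ch p y)^2 - p / (Ch p y)^2).

Lemma Ch_pos p y : 0 < Ch p y.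
Proof. unfold Ch. pose proof (exp_pos (p*y)); pose proof (exp_pos (-(p*y))). lra. Qed.
Lemma CS p y : Ch p y ^2 = Sh p y ^2 + 1.
Proof. unfold Ch, Sh. rewrite exp_Ropp. pose proof (exp_pos (p*y)). field. lra. Qed.
Lemma Ch_ge1 p y : 1 <= Ch p y.
Proof. pose proof (CS p y). pose proof (Ch_pos p y). nra. Qed.
Lemma ph_pos p y : 0 < ph p y.
Proof. apply exp_pos. Qed.

Lemma d_ph p y : 0 < p -> is_derive (ph p) y (phd p y).
Proof. intros hp. pose proof (Ch_pos p y). unfold phd, ph, Ch in *. auto_derive.
 - auto.
 - unfold Sh. unfold Rdiv. 
   set (L := exp (- (1 / p) * ln ((exp (p * y) + exp (- (p * y))) * / 2))).
   set (A := exp (p*y)) in *. set (B := exp (-(p*y))) in *. field. split; lra.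
Qed.

Lemma d_phd p y : 0 < p -> is_derive (phd p) y (phdd p y).
Proof. intros hp. pose proof (Ch_pos p y). unfold phdd, phd, ph, Sh, Ch in *. auto_derive.
 - unfold Rdiv in H. repeat split; lra.
 - rewrite !exp_Ropp in *. unfold Rdiv.
   set (L := exp (- (1 / p) * ln ((exp (p * y) + / exp (p * y)) * / 2))).
   pose proof (exp_pos (p*y)).
   set (A := exp (p*y)) in *. 
   assert (A + / A <> 0). { pose proof (Rinv_0_lt_compat A H0). lra. }
   field. repeat split; nra.
Qed.

Lemma phi_eq p y : phi_sol p y = ph p y.
Proof. unfold phi_sol, Rpower, ph. rewrite ln_Rinv. 2: apply (Ch_pos p y).
  f_equal. unfold Ch, cosh. ring. Qed.

Lemma ph_bound p y : 0 < p -> ph p y ^2 <= exp (2 * ln 2 / p) * exp (-2*y).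
Proof. intros hp. unfold ph. rewrite <- exp_plus.
  replace (exp (- (1 / p) * ln (Ch p y)) ^ 2) with (exp (2 * (- (1 / p) * ln (Ch p y)))).
  2:{ replace (2 * (- (1 / p) * ln (Ch p y))) with (- (1 / p) * ln (Ch p y) + - (1 / p) * ln (Ch p y)) by ring.
      rewrite exp_plus. ring. }
  apply exp_le'.
  assert (H: p*y - ln 2 <= ln (Ch p y)).
  { rewrite <- (ln_exp (p*y)). rewrite <- ln_div by (try apply exp_pos; lra).
    apply ln_le. apply Rdiv_lt_0_compat; [apply exp_pos| lra].
    unfold Ch. pose proof (exp_pos (-(p*y))). lra. }
  assert (0 < / p) by (apply Rinv_0_lt_compat; lra).
  set (u := ln (Ch p y)) in *.
  replace (2 * (-(1/p) * u)) with (-(2 * /p) * u) by (field; lra).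
  replace (2 * ln 2 / p + -2*y) with (-(2 * /p) * (p*y - ln 2)) by (field; lra).
  nra.
Qed.

Lemma cont_ph p y : 0 < p -> continuous (ph p) y.
Proof. intros hp. apply exd_cont. eexists; apply d_ph; auto. Qed.
Lemma cont_phd p y : 0 < p -> continuous (phd p) y.
Proof. intros hp. apply exd_cont. eexists; apply d_phd; auto. Qed.
Lemma cont_phdd p y : 0 < p -> continuous (phdd p) y.
Proof. intros hp. apply exd_cont. pose proof (Ch_pos p y).
  unfold phdd, ph, Sh, Ch in *. auto_derive. unfold Rdiv in H. set (C := (exp (p * y) + exp (- (p * y))) * / 2) in *. repeat split; try nra. Qed.

Lemma L2_edge p c b g M : 0 < p -> (forall x, continuous g x) ->
  (forall y, g y ^2 <= M * ph p y ^2) -> L2_halfline (fun x => c * g (x + b)).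
Proof.
  intros hp Hg Hb. unfold L2_halfline.
  assert (HM: 0 <= M). { pose proof (Hb 0). pose proof (ph_pos p 0).
    assert (0 < ph p 0 ^2) by (apply pow_lt; auto). 
    destruct (Rle_or_lt 0 M); auto. nra. }
  apply (L2_gen _ (c^2 * M * exp (2 * ln 2 / p) * exp (-2*b))).
  - intros x.
    apply (continuous_comp (fun x => g (x+b)) (fun y => (c*y)^2)).
    + apply (continuous_comp (fun x => x + b) g). apply exd_cont; auto_derive; auto. apply Hg.
    + apply exd_cont; auto_derive; auto.
  - intros x. simpl. nra.
  - intros x. pose proof (Hb (x+b)). pose proof (ph_bound p (x+b) hp).
    replace (-2*(x+b)) with (-2*x + -2*b) in H0 by ring. rewrite exp_plus in H0.
    assert (0 <= c^2) by nra.
    replace ((c * g (x+b))^2) with (c^2 * g (x+b) ^2) by ring.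
    apply Rle_trans with (c^2 * (M * ph p (x+b) ^2)). apply Rmult_le_compat_l; auto.
    apply Rle_trans with (c^2 * (M * (exp (2 * ln 2 / p) * (exp (-2*x) * exp (-2*b))))).
    apply Rmult_le_compat_l; auto. apply Rmult_le_compat_l; auto.
    right; ring.
Qed.

Lemma m_bound p y : 0 < p -> ((Sh p y / Ch p y)^2 - p / (Ch p y)^2)^2 <= (1+p)^2.
Proof. intros hp. pose proof (CS p y). pose proof (Ch_ge1 p y).
  set (C := Ch p y) in *. set (S := Sh p y) in *.
  assert (0 < / C^2) by (apply Rinv_0_lt_compat; nra).
  assert (/ C^2 <= 1). { rewrite <- Rinv_1. apply Rinv_le_contravar; nra. }
  replace ((S / C)^2 - p / C^2) with ((S^2 - p) / C^2) by (field; nra).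
  replace (S^2) with (C^2 - 1) by lra.
  replace ((C^2 - 1 - p) / C^2) with (1 - (1+p) * / C^2) by (field; nra).
  set (t := / C^2) in *. assert (0 <= p + (1+p)*t) by nra. assert (0 <= 2 + p - (1+p)*t) by nra. nra.
Qed.

Lemma t_bound p y : (Sh p y / Ch p y)^2 <= 1.
Proof. pose proof (CS p y). pose proof (Ch_ge1 p y).
  set (C := Ch p y) in *. set (S := Sh p y) in *.
  replace ((S/C)^2) with (S^2 / C^2) by (field; nra).
  apply (Rmult_le_reg_r (C^2)). nra. field_simplify; nra.
Qed.

Lemma shift_deriv (g dg : R -> R) (c b x : R) : is_derive g (x + b) (dg (x+b)) ->
  is_derive (fun x => c * g (x + b)) x (c * dg (x + b)).
Proof. intros H. apply is_derive_scal.
  assert (H1 : is_derive (fun x => x + b) x 1) by (auto_derive; auto; ring).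
  pose proof (is_derive_comp g (fun x => x + b) x _ _ H H1) as H2.
  unfold scal in H2; simpl in H2; unfold mult in H2; simpl in H2. rewrite Rmult_1_l in H2. exact H2.
Qed.

Lemma edge p c b : 0 < p ->
  (forall x, Derive (fun x => c * phi_sol p (x + b)) x = c * phd p (x+b)) /\
  H2_halfline (fun x => c * phi_sol p (x + b)).
Proof.
  intros hp.
  assert (Hf: (fun x => c * phi_sol p (x + b)) = (fun x => c * ph p (x+b))).
  { apply functional_extensionality; intros; rewrite phi_eq; auto. }
  rewrite Hf.
  assert (D1: forall x, is_derive (fun x => c * ph p (x+b)) x (c * phd p (x+b))).
  { intros x. apply shift_deriv. apply d_ph; auto. }
  assert (D2: forall x, is_derive (fun x => c * phd p (x+b)) x (c * phdd p (x+b))).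
  { intros x. apply shift_deriv. apply d_phd; auto. }
  assert (E1: Derive (fun x => c * ph p (x+b)) = (fun x => c * phd p (x+b))).
  { apply functional_extensionality; intros; apply is_derive_unique; auto. }
  assert (E2: Derive (fun x => c * phd p (x+b)) = (fun x => c * phdd p (x+b))).
  { apply functional_extensionality; intros; apply is_derive_unique; auto. }
  split. { intros; rewrite E1; auto. }
  unfold H2_halfline. rewrite E1, E2. split; [|split; [|split; [|split]]].
  - intros x _. assert (Hc: continuous (fun x => c * ph p (x+b)) x) by (apply exd_cont; eexists; apply D1).
    intros P HP. specialize (Hc P HP). unfold filtermap, at_right, within in *. eapply filter_imp; [|exact Hc]. simpl; auto.
  - intros x _. split; eexists; [apply D1|apply D2].
  - apply (L2_edge p c b (ph p) 1); auto. intros; apply cont_ph; auto. intros; lra.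
  - apply (L2_edge p c b (phd p) 1); auto. intros; apply cont_phd; auto.
    intros y. unfold phd. pose proof (t_bound p y). pose proof (ph_pos p y).
    replace ((- ph p y * (Sh p y / Ch p y))^2) with (ph p y ^2 * (Sh p y / Ch p y)^2) by ring.
    assert (0 < ph p y ^2) by nra. nra.
  - apply (L2_edge p c b (phdd p) ((1+p)^2)); auto. intros; apply cont_phdd; auto.
    intros y. unfold phdd. pose proof (m_bound p y hp). pose proof (ph_pos p y).
    set (m := ((Sh p y / Ch p y)^2 - p / (Ch p y)^2)) in *.
    replace ((ph p y * m)^2) with (ph p y ^2 * m^2) by ring.
    assert (0 < ph p y ^2) by nra. nra.
Qed.

Lemma Ch_even p y : Ch p (-y) = Ch p y.
Proof. unfold Ch. replace (p * - y) with (-(p*y)) by ring. rewrite Ropp_involutive. lra. Qed.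
Lemma Sh_odd p y : Sh p (-y) = - Sh p y.
Proof. unfold Sh. replace (p * - y) with (-(p*y)) by ring. rewrite Ropp_involutive. field. Qed.
Lemma ph_even p y : ph p (-y) = ph p y.
Proof. unfold ph. rewrite Ch_even. auto. Qed.
Lemma phd_odd p y : phd p (-y) = - phd p y.
Proof. unfold phd. rewrite ph_even, Ch_even, Sh_odd. pose proof (Ch_pos p y). field. lra. Qed.

Lemma ph_pow p y : 0 < p -> Rpower (ph p y) (2*p) = / (Ch p y)^2.
Proof. intros hp. rewrite <- phi_eq. unfold phi_sol. rewrite Rpower_mult.
  replace (1/p*(2*p)) with (INR 2) by (simpl; field; lra).
  pose proof (Ch_pos p y).
  change (cosh (p*y)) with (Ch p y). rewrite Rpower_pow. field. lra.
  apply Rinv_0_lt_compat; auto. Qed.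

Lemma Rpower_c al p : 0 < al -> 0 < p -> Rpower (Rpower al (-(1/p))) (2*p) = / al^2.
Proof. intros ha hp. rewrite Rpower_mult.
  replace (-(1/p)*(2*p)) with (-(INR 2)) by (simpl; field; lra).
  rewrite Rpower_Ropp, Rpower_pow; auto. Qed.

Theorem lemma3p1 (p : R) (N K : nat) (alpha : nat -> R)
  (hp : 0 < p) (hN : (2 <= N)%nat) (hK1 : (1 <= K)%nat) (hK2 : (K <= N - 1)%nat)
  (halpha : forall j, (j < N)%nat -> 0 < alpha j)
  (hsum : sum_n_m (fun j => Rpower (alpha j) (- (2 / p))) 0 (K - 1)
        = sum_n_m (fun j => Rpower (alpha j) (- (2 / p))) K (N - 1)) :
  forall a : R,
    let Phi : nat -> R -> R := fun j x =>
      if (j <? K)%nat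
      then Rpower (alpha j) (- (1 / p)) * phi_sol p (x + a)
      else Rpower (alpha j) (- (1 / p)) * phi_sol p (x - a) in
    H2_Gamma N p alpha Phi /\
    (forall j, (j < N)%nat -> forall x, 0 < x ->
       - Derive (Derive (Phi j)) x + Phi j x
       - (p + 1) * (alpha j)^2 * Rpower (Rabs (Phi j x)) (2 * p) * Phi j x = 0).
Proof.
  intros a Phi.
  set (c := fun j => Rpower (alpha j) (- (1 / p))).
  set (b := fun j => if (j <? K)%nat then a else - a).
  assert (HPhi: forall j, Phi j = fun x => c j * phi_sol p (x + b j)).
  { intros j. unfold Phi, c, b. destruct (j <? K)%nat; auto.
  }
  assert (HD: forall j, Derive (Phi j) = fun x => c j * phd p (x + b j)).
  { intros j. rewrite HPhi. apply functional_extensionality; intros x. apply (edge p (c j) (b j) hp). }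
  split.
  - split; [|split].
    + intros j hj. rewrite HPhi. apply edge; auto.
    + assert (V: forall i, (i < N)%nat -> Rpower (alpha i) (1/p) * Phi i 0 = ph p a).
      { intros i hi. rewrite HPhi. cbv beta. rewrite phi_eq. unfold c.
        replace (Rpower (alpha i) (1 / p) * (Rpower (alpha i) (- (1 / p)) * ph p (0 + b i)))
          with (Rpower (alpha i) (1 / p + - (1 / p)) * ph p (0 + b i)) by (rewrite Rpower_plus; ring).
        replace (1 / p + - (1 / p)) with 0 by ring. rewrite Rpower_O by auto.
        unfold b. destruct (i <? K)%nat; rewrite Rplus_0_l; try rewrite ph_even; ring. }
      intros i j hi hj. rewrite (V i hi), (V j hj). auto.
    + exists (fun j => c j * phd p (0 + b j)). split.
      * intros j hj. unfold deriv_at_vertex. replace (Derive (Phi j)) with (fun x => c j * phd p (x + b j)) by (symmetry; apply HD).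
        assert (Hc: continuous (fun x => c j * phd p (x + b j)) 0).
        { apply exd_cont. eexists. apply shift_deriv. apply d_phd; auto. }
        intros P HP. specialize (Hc P HP). unfold filtermap, at_right, within in *.
        eapply filter_imp; [|exact Hc]. simpl; auto.
      * set (P := phd p a).
        assert (Hterm: forall j, Rpower (alpha j) (-(1/p)) * (c j * phd p (0 + b j)) =
          (if (j <? K)%nat then Rpower (alpha j) (-(2/p)) * P else Rpower (alpha j) (-(2/p)) * (-P))).
        { intros j. unfold c, b. rewrite Rplus_0_l.
          replace (-(2/p)) with (-(1/p) + -(1/p)) by (field; lra). rewrite Rpower_plus.
          destruct (j <? K)%nat; [|rewrite phd_odd]; unfold P; ring. }
        rewrite (sum_n_m_ext _ _ _ _ Hterm).
        rewrite (sum_n_m_Chasles _ 0 (K-1) (N-1)) by lia.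
        replace (S (K-1)) with K by lia.
        rewrite (sum_n_m_ext_loc _ (fun j => mult (Rpower (alpha j) (-(2/p))) P) 0 (K-1)).
        2: { intros k hk. replace (k <? K)%nat with true. reflexivity. symmetry; apply Nat.ltb_lt; lia. }
        rewrite (sum_n_m_ext_loc _ (fun j => mult (Rpower (alpha j) (-(2/p))) (-P)) K (N-1)).
        2: { intros k hk. replace (k <? K)%nat with false. reflexivity. symmetry; apply Nat.ltb_ge; lia. }
        rewrite !sum_n_m_mult_r. unfold plus, mult; simpl.
        assert (E: forall u v : R, u = v -> u * P + v * (-P) = 0) by (intros u v ->; ring).
        apply E. exact hsum.
  - intros j hj x hx. rewrite HD. rewrite HPhi. cbv beta.
    replace (Derive (fun x0 : R => c j * phd p (x0 + b j)) x) with (c j * phdd p (x + b j))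
      by (symmetry; apply is_derive_unique; apply shift_deriv; apply d_phd; auto).
    rewrite phi_eq.
    assert (hc: 0 < c j) by (unfold c, Rpower; apply exp_pos).
    pose proof (ph_pos p (x + b j)).
    rewrite Rabs_pos_eq by nra.
    rewrite <- Rpower_mult_distr by auto.
    replace (Rpower (c j) (2*p)) with (/ alpha j ^2) by (unfold c; rewrite Rpower_c; auto). rewrite ph_pow by auto.
    pose proof (halpha j hj). pose proof (CS p (x + b j)). pose proof (Ch_ge1 p (x + b j)).
    unfold phdd. set (C := Ch p (x + b j)) in *. set (S := Sh p (x + b j)) in *.
    replace ((S/C)^2) with ((C^2-1)/C^2) by (replace (C^2 - 1) with (S^2) by lra; field; lra).
    field. split; nra.
Qed.
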